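(* Let $(V,d,k,q)$ be an instance of the individually fair $k$-center with outliers problem (IF$k$CO) as defined in the context, and let $(S,O,\sigma)$ be the solution output by the basic algorithm (Algorithm 2) described in the context. Then $$\alpha(S,O,\sigma)=\max_{i\in V\setminus O}\frac{d_{\sigma(i)i}}{NR_q(i)}\le 2.$$
   Context: IF$k$CO instance: a finite set $V$ with $|V|=n$, a metric $d$ on $V$ (nonnegative, symmetric, $d_{ii}=0$, triangle inequality), and integers $k\ge 1$ and $q\ge 0$. For $i\in V$, $NR_q(i)$ is the distance from $i$ to its $\lceil (n-q)/k\rceil$-th nearest neighbor in $V$, where $i$ counts as its own (first) nearest neighbor. A solution is $(S,O,\sigma)$ with $S,O\subseteq V$ and $\sigma:V\setminus O\to S$; its outlier-related fairness ratio is $\alpha(S,O,\sigma)=\max_{i\in V\setminus O} d_{\sigma(i)i}/NR_q(i)$. Algorithm 2: set $P:=V$, $S:=\emptyset$. While $P\neq\emptyset$ and $|S|<k$: pick $s\in P$ minimizing $NR_q(i)$ over $i\in P$; set $S:=S\cup\{s\}$ and $P:=\{i\in P: d_{is}>2\,NR_q(i)\}$. Then set $O:=P$ and, for each $i\in V\setminus O$, let $\sigma(i)$ be a center $h\in S$ minimizing $d_{ih}$. Output $(S,O,\sigma)$. *)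

(* Defs.v *)
From HB Require Import structures.
From mathcomp Require Import all_boot all_order all_algebra.
Set Implicit Arguments. Unset Strict Implicit. Unset Printing Implicit Defensive.
Import Order.TTheory GRing.Theory Num.Theory.
Local Open Scope ring_scope.

Section IFkCO.
Variables (R : realFieldType) (V : finType) (d : V -> V -> R) (k q : nat).

Definition is_metric : Prop :=
  [/\ forall i j, 0 <= d i j,
      forall i j, d i j = d j i,
      forall i, d i i = 0
    & forall i j l, d i l <= d i j + d j l].

(* m = ceil((n - q)/k), n = |V| (truncated subtraction: m = 0 when q >= n) *)
Definition nr_rank : nat := ((#|V| - q) + k.-1) %/ k.

(* NR_q(i): distance from i to its m-th nearest neighbour (i itself being the
   1st), i.e. the m-th smallest element of the multiset {d i j | j in V}.
   Convention for the degenerate case m = 0: the 1st one, i.e. 0. *)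
Definition NR (i : V) : R :=
  nth 0 (sort <=%R [seq d i j | j <- enum V]) nr_rank.-1.

Definition remaining (cs : seq V) : {set V} :=
  foldl (fun (P : {set V}) (s : V) => [set i in P | 2 * NR i < d i s]) [set: V] cs.

(* cs is the sequence of centers chosen by a (complete) run of Algorithm 2,
   in order, with arbitrary tie-breaking in the argmin:
   - each picked center s minimizes NR over the current P (and lies in P);
   - the loop runs only while |S| < k, and stops when P is empty or |S| = k. *)
Definition alg2_run (cs : seq V) : Prop :=
  [/\ forall pre s post, cs = pre ++ s :: post ->
        s \in remaining pre /\ (forall i, i \in remaining pre -> NR s <= NR i),
      (size cs <= k)%N
    & remaining cs = set0 \/ size cs = k].

(* (S, O, sigma) is an output of Algorithm 2; sigma : V \ O -> S is modelled by
   a total function whose values only matter on V \ O *)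
Definition alg2_output (S O : {set V}) (sigma : V -> V) : Prop :=
  exists cs, [/\ alg2_run cs, S = [set x in cs], O = remaining cs
    & forall i, i \notin O ->
        sigma i \in S /\ (forall h, h \in S -> d i (sigma i) <= d i h)].

(* outlier-related fairness ratio alpha(S,O,sigma) = max_{i in V\O} d(sigma i, i)/NR_q(i)
   (max over the empty set taken as 0) *)
Definition fairness_ratio (O : {set V}) (sigma : V -> V) : R :=
  \big[Num.max/0]_(i in ~: O) (d (sigma i) i / NR i).

End IFkCO.

(* Main.v *)
Require Import Defs.
From HB Require Import structures.
From mathcomp Require Import all_boot all_order all_algebra.
Import Order.TTheory GRing.Theory Num.Theory.
Local Open Scope ring_scope.

Lemma out_near (R : realFieldType) (V : finType) (d : V -> V -> R) (k q : nat)
  (i : V) (cs : seq V) (P : {set V}) :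
  i \in P ->
  i \notin foldl (fun (P : {set V}) (s : V) => [set j in P | 2 * NR d k q j < d j s]) P cs ->
  exists2 s, s \in cs & d i s <= 2 * NR d k q i.
Proof.
elim: cs P => [|s cs IH] P iP /=; first by rewrite iP.
case: (boolP (2 * NR d k q i < d i s)) => h.
  move=> /(IH [set j in P | 2 * NR d k q j < d j s]).
  by rewrite inE iP h => /(_ isT) [t ts ht]; exists t => //; rewrite inE ts orbT.
by move=> _; exists s; [rewrite inE eqxx | rewrite leNgt].
Qed.

Theorem lemma3 (R : realFieldType) (V : finType) (d : V -> V -> R) (k q : nat)
  (hd : is_metric d) (hk : (1 <= k)%N)
  (S O : {set V}) (sigma : V -> V) :
  alg2_output d k q S O sigma ->
  fairness_ratio d k q O sigma <= 2.
Proof.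
case: hd => d0 dsym _ _.
case=> cs [_ -> -> hsig].
rewrite /fairness_ratio.
apply: (big_ind (fun x => x <= 2)) => //.
  by move=> x y hx hy; rewrite ge_max hx hy.
move=> i; rewrite inE => iO.
have [s scs hs] := @out_near R V d k q i cs _ (in_setT i) iO.
have [sS smin] := hsig i iO.
have hle : d (sigma i) i <= 2 * NR d k q i.
  rewrite dsym; apply: le_trans hs; apply: smin; by rewrite inE.
case: (ltP 0 (NR d k q i)) => hN.
  by rewrite ler_pdivrMr // mulrC.
apply: le_trans (_ : 0 <= 2) => //.
by apply: mulr_ge0_le0 => //; rewrite invr_le0.
Qed.
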